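(* Assume $X_0\in L^\infty$, $x\in\mathbb{R}$, and let $z\ge\frac{x}{\mathrm{E}[\rho]}-Q_0(1)$. If $X^*$ is variance-minimal in $\mathscr{X}_{\mathrm{icx}}(x,X_0+z)$, then $\psi(X^* )=z$.
   Context: $(\Omega,\mathcal{F},\mathbb{P})$ is a complete nonatomic probability space. $\rho\in L^2$ with $\mathbb{P}(\rho>0)=1$ and $\mathrm{Var}[\rho]>0$. For a random variable $X$, $Q_X(t)=\inf\{y:\mathbb{P}(X\le y)>t\}$ for $t\in[0,1)$, $Q_X(1):=\lim_{t\uparrow1}Q_X(t)$; $Q_0:=Q_{X_0}$. For random variables $X,Y$, $X\succeq_{\mathrm{icx}}Y$ means $\mathrm{E}[f(X)]\ge\mathrm{E}[f(Y)]$ for all increasing convex $f$ (equivalently $\int_t^1Q_X\ge\int_t^1Q_Y$ for all $t\in[0,1]$). $\mathscr{X}_{\mathrm{icx}}(x,Y_0)=\{X\in L^2:\mathrm{E}[\rho X]\le x,\ X\succeq_{\mathrm{icx}}Y_0\}$, and $X$ is variance-minimal in it if it minimizes $\mathrm{Var}[X]$ over it. The beating performance of $X\in L^2$ is $\psi(X)=\sup\{m\in\mathbb{R}: X-m\succeq_{\mathrm{icx}}X_0\}$ (with $\sup\emptyset=-\infty$). *)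

(* Defs.v *)
From HB Require Import structures.
From mathcomp Require Import all_boot all_order all_algebra.
From mathcomp Require Import all_classical all_reals all_analysis.
Set Implicit Arguments. Unset Strict Implicit. Unset Printing Implicit Defensive.
Import Order.TTheory GRing.Theory Num.Theory.
Import numFieldNormedType.Exports.
Local Open Scope classical_set_scope.
Local Open Scope ring_scope.

Section defs.
Context {d : measure_display} {T : measurableType d} {R : realType}.
Variable P : probability T R.

Definition nonatomic : Prop :=
  forall A : set T, measurable A -> (0 < P A)%E ->
    exists B : set T, [/\ measurable B, B `<=` A, (0 < P B)%E & (P B < P A)%E].

Definition convex_fun (f : R -> R) : Prop :=
  forall (x y t : R), 0 <= t -> t <= 1 ->
    f (t * x + (1 - t) * y) <= t * f x + (1 - t) * f y.

Definition icx_ge (X Y : T -> R) : Prop :=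
  forall f : R -> R, {homo f : x y / x <= y} -> convex_fun f ->
    ('E_P[f \o Y] <= 'E_P[f \o X])%E.

Definition quantile_lt (X : T -> R) (t : R) : R :=
  inf [set y : R | (t%:E < P [set w | (X w <= y)%R])%E].

Definition quantile (X : T -> R) (t : R) : R :=
  if t < 1 then quantile_lt X t
  else lim (quantile_lt X s @[s --> 1^'-]).

Definition Xicx (rho : T -> R) (x : R) (Y : T -> R) : set (T -> R) :=
  [set X | [/\ X \in Lfun P 2%:E,
               ('E_P[fun w => (rho w * X w)%R] <= x%:E)%E & icx_ge X Y]].

Definition variance_minimal (S : set (T -> R)) (X : T -> R) : Prop :=
  S X /\ forall Y, S Y -> (variance P X <= variance P Y)%E.

(* beating performance psi(X) = sup {m : X - m >=_icx X0}, sup of empty = -oo *)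
Definition beating_perf (X0 X : T -> R) : \bar R :=
  ereal_sup [set m%:E | m in [set m : R | icx_ge (fun w => X w - m) X0]].

End defs.

(* Main.v *)
Require Import Defs.
From HB Require Import structures.
From mathcomp Require Import all_boot all_order all_algebra.
From mathcomp Require Import all_classical all_reals all_analysis.
From mathcomp Require Import measurable_realfun ess_sup_inf.
From mathcomp Require Import ring lra.
Import Order.TTheory GRing.Theory Num.Theory.
Local Open Scope classical_set_scope.
Local Open Scope ring_scope.
Set Implicit Arguments. Unset Strict Implicit.
Section S.
Context (d : measure_display) (T : measurableType d) (R : realType) (P : probability T R).

Lemma ae_le_expectation (f g : T -> R) :
  measurable_fun setT f -> measurable_fun setT g ->
  {ae P, forall w, f w <= g w} -> ('E_P[f] <= 'E_P[g])%E.
Proof.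
move=> mf mg fg; rewrite unlock integralE [X in (_ <= X)%E]integralE.
have mf' : measurable_fun setT (EFin \o f) by exact/measurable_EFinP.
have mg' : measurable_fun setT (EFin \o g) by exact/measurable_EFinP.
apply: leeB.
- apply: ae_ge0_le_integral => //.
  + exact: measurable_funepos.
  + exact: measurable_funepos.
  + apply: filterS fg => x fgx _.
    apply: (@funepos_le _ _ [set x] (EFin \o f) (EFin \o g)); last by rewrite inE.
    by move=> y; rewrite inE => ->; rewrite lee_fin.
- apply: ae_ge0_le_integral => //.
  + exact: measurable_funeneg.
  + exact: measurable_funeneg.
  + apply: filterS fg => x fgx _.
    apply: (@funeneg_le _ _ [set x] (EFin \o f) (EFin \o g)); last by rewrite inE.
    by move=> y; rewrite inE => ->; rewrite lee_fin.
Qed.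

Lemma convex_affine (f : R -> R) (a b : R) : 0 <= a ->
  {homo f : x y / x <= y} -> convex_fun f ->
  {homo (fun y => f (a * y + b)) : x y / x <= y} /\ convex_fun (fun y => f (a * y + b)).
Proof.
move=> a0 hf cf; split.
  by move=> x y xy; apply: hf; rewrite lerD2r ler_wpM2l.
move=> x y t t0 t1.
have -> : a * (t * x + (1 - t) * y) + b = t * (a * x + b) + (1 - t) * (a * y + b).
  by ring.
exact: cf.
Qed.

Lemma icx_affine (X Y : T -> R) (a b : R) : 0 <= a ->
  icx_ge P X Y -> icx_ge P (fun w => a * X w + b) (fun w => a * Y w + b).
Proof.
move=> a0 H f hf cf.
have [hg cg] := @convex_affine f a b a0 hf cf.
exact: (H _ hg cg).
Qed.

Lemma icx_ae (X Y Y' : T -> R) :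
  measurable_fun setT Y -> measurable_fun setT Y' ->
  {ae P, forall w, Y' w <= Y w} -> icx_ge P X Y -> icx_ge P X Y'.
Proof.
move=> mY mY' YY H f hf cf; apply: le_trans (H f hf cf).
have mf : measurable_fun setT f by apply: nondecreasing_measurable.
apply: ae_le_expectation.
- exact: measurableT_comp.
- exact: measurableT_comp.
- by apply: filterS YY => w; exact: hf.
Qed.

Lemma Lfun_meas (f : T -> R) p : f \in Lfun P p -> measurable_fun setT f.
Proof. by rewrite inE => /andP[/[!inE]/= mf _]. Qed.

Lemma Linf_bound (f : T -> R) : f \in Lfun P +oo%E ->
  exists M : R, 0 <= M /\ {ae P, forall w, `|f w| <= M}.
Proof.
rewrite inE => /andP[_]; rewrite inE/= /finite_norm unlock /Lnorm.
rewrite (_ : (0 < P [set: T])%E = true); last by rewrite probability_setT lte01.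
move He : (ess_sup_inf.ess_sup _ _) => e elt.
have := ess_sup_ge P (abse \o (EFin \o f)); rewrite He.
move: elt; case: e He => [r| |] // He _ H.
- exists (Num.max r 0); split; first by rewrite le_max lexx orbT.
  apply: filterS H => w /=; rewrite lee_fin => h.
  by rewrite (le_trans h)// le_max lexx.
- exists 0; split => //; apply: filterS H => w /=.
  by rewrite leeNy_eq.
Qed.

Lemma ae_ex (Q : T -> Prop) : {ae P, forall w, Q w} -> exists w, Q w.
Proof.
move=> H.
have P0 : (0 < P [set: T])%E.
  by have := @probability_setT _ _ _ P; move=> /= ->; rewrite lte01.
have PF := ae_properfilter_algebraOfSetsType P0.
by have [w Qw] := filter_ex_subproof (@filter_not_empty _ _ PF) H; exists w.
Qed.

Lemma ge0_expectation0_ae (Y : T -> R) : measurable_fun setT Y ->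
  (forall w, 0 <= Y w) -> ('E_P[Y] = 0)%E -> {ae P, forall w, Y w = 0}.
Proof.
move=> mY Y0 EY.
have mY' : measurable_fun setT (EFin \o Y) by exact/measurable_EFinP.
have H0 : (\int[P]_(x in [set: T]) `|(EFin \o Y) x|)%E = 0%E.
  rewrite -EY unlock; apply: eq_integral => x _ /=.
  by rewrite ger0_norm.
have := (ae_eq_integral_abs P measurableT mY').1 H0.
by apply: filterS => w /(_ I) /= [].
Qed.

Lemma var0_ae (X : T -> R) : X \in Lfun P 2%:E -> variance P X = 0%E ->
  {ae P, forall w, X w = fine 'E_P[X]}.
Proof.
move=> X2; rewrite /variance covariance.unlock => V0.
have mX := Lfun_meas X2.
set k := fine _ in V0 *.
have mY : measurable_fun setT ((X \- cst k) * (X \- cst k))%R.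
  by apply: measurable_funM; apply: measurable_funB.
have Y0 : forall w, 0 <= ((X \- cst k) * (X \- cst k))%R w.
  by move=> w; rewrite !fctE; exact: sqr_ge0.
apply: filterS (ge0_expectation0_ae mY Y0 V0) => w.
by rewrite !fctE => /eqP; rewrite mulf_eq0 orbb subr_eq0 => /eqP.
Qed.

Lemma expectation_ae_eq (f g : T -> R) :
  measurable_fun setT f -> measurable_fun setT g ->
  {ae P, forall w, f w = g w} -> ('E_P[f] = 'E_P[g])%E.
Proof.
move=> mf mg fg; rewrite unlock.
apply: (ae_eq_integral (EFin \o g)) => //.
- exact/measurable_EFinP.
- exact/measurable_EFinP.
- by apply: filterS fg => w /= ->.
Qed.

Lemma L2_L1 (f : T -> R) : f \in Lfun P 2%:E -> f \in Lfun P 1.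
Proof. by apply: Lfun_subset12; rewrite fin_num_measure. Qed.

Lemma Erho_pos (rho : T -> R) : rho \in Lfun P 2%:E ->
  {ae P, forall w, 0 < rho w} ->
  ((0 < 'E_P[rho]) /\ 'E_P[rho] \is a fin_num)%E.
Proof.
move=> r2 rpos; split; last exact/expectation_fin_num/L2_L1.
have mr := Lfun_meas r2.
pose rp := fun w => Num.max (rho w) 0.
have mrp : measurable_fun setT rp.
  by apply: measurable_maxr => //.
have -> : ('E_P[rho] = 'E_P[rp])%E.
  apply: expectation_ae_eq => //; apply: filterS rpos => w r0.
  by rewrite /rp max_l// ltW.
have rp0 : forall w, 0 <= rp w by move=> w; rewrite /rp le_max lexx orbT.
rewrite lt_neqAle expectation_ge0// andbT; apply/negP => /eqP E0.
have := ge0_expectation0_ae mrp rp0 (esym E0).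
move=> H.
have : {ae P, forall w, False}.
  apply: filterS2 H rpos => w; rewrite /rp => /eqP.
  rewrite eq_le ge_max => /andP[/andP[r0 _] _] r.
  by have := lt_le_trans r r0; rewrite ltxx.
by move/ae_ex => [].
Qed.

Lemma mle (X : T -> R) y : measurable_fun setT X -> measurable [set w | X w <= y].
Proof.
move=> mX.
have -> : [set w | X w <= y] = X @^-1` `]-oo, y] by apply/seteqP; split => w /=; rewrite in_itv.
by rewrite -[X @^-1` _]setTI; apply: mX.
Qed.

Lemma ae_prob1 (X : T -> R) b : measurable_fun setT X ->
  {ae P, forall w, X w <= b} -> P [set w | X w <= b] = 1%E.
Proof.
move=> mX H.
have mA := mle b mX.
have : P (~` [set w | X w <= b]) = 0%E.
  by apply: measure_negligible => //; exact: measurableC.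
rewrite probability_setC//.
move: (fin_num_measure P _ mA); case: (P [set w | X w <= b]) => // r _.
by rewrite -EFinB => -[/eqP]; rewrite subr_eq0 => /eqP <-.
Qed.

Lemma quantile1_le (X : T -> R) (b M : R) : measurable_fun setT X ->
  {ae P, forall w, -M <= X w} -> {ae P, forall w, X w <= b} ->
  quantile P X 1 <= b.
Proof.
move=> mX Hlo Hb.
pose S (t : R) := [set y : R | (t%:E < P [set w | (X w <= y)%R])%E].
have Sb : forall t : R, t < 1 -> S t b by move=> t t1; rewrite /S /= ae_prob1// lte_fin.
have Slb : forall t : R, 0 <= t -> has_lbound (S t).
  move=> t t0; exists (-M) => y; rewrite /S/= => Hy; rewrite leNgt; apply/negP => yM.
  have : P [set w | X w <= y] = 0%E.
    apply: measure_negligible; first exact: mle.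
    apply: negligibleS Hlo => w /= Xy H.
    by have := le_lt_trans H (le_lt_trans Xy yM); rewrite ltxx.
  by move=> h; move: Hy; rewrite h lte_fin ltNge t0.
have qle : forall t : R, 0 <= t -> t < 1 -> quantile_lt P X t <= b.
  by move=> t t0 t1; apply: ge_inf (Slb t t0) _ (Sb t t1).
have qmono : forall s t : R, 0 <= s -> s <= t -> t < 1 ->
    quantile_lt P X s <= quantile_lt P X t.
  move=> s t s0 st t1; apply: lb_le_inf; first by exists b; exact: Sb.
  move=> y Sy; apply: ge_inf (Slb s s0) _ _.
  by rewrite /S/=; apply: le_lt_trans Sy; rewrite lee_fin.
rewrite /quantile ltxx.
apply: limr_le.
- apply: nondecreasing_at_left_is_cvgr.
  + near=> x => u v; rewrite !in_itv/= => /andP[xu u1] /andP[xv v1] uv.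
    apply: qmono => //; apply: ltW; apply: lt_trans xu.
    by near: x; exact: nbhs_left_gt.
  + near=> x; exists b => yy [u /=]; rewrite in_itv/= => /andP[xu u1] <-.
    apply: qle => //; apply: ltW; apply: lt_trans xu.
    by near: x; exact: nbhs_left_gt.
- near=> t; apply: qle.
  + by apply: ltW; near: t; exact: nbhs_left_gt.
  + by near: t; exact: nbhs_left_lt.
Unshelve. all: by end_near. Qed.

Lemma hinge_icx (k : R) :
  {homo (fun y : R => Num.max (y - k) 0) : x y / x <= y} /\
  convex_fun (fun y : R => Num.max (y - k) 0).
Proof.
split.
  move=> x y xy; rewrite ge_max !le_max lexx !orbT andbT.
  by rewrite lerD2r xy.
move=> x y t t0 t1.
have h1 : x - k <= Num.max (x - k) 0 by rewrite le_max lexx.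
have h2 : y - k <= Num.max (y - k) 0 by rewrite le_max lexx.
have h3 : 0 <= Num.max (x - k) 0 by rewrite le_max lexx orbT.
have h4 : 0 <= Num.max (y - k) 0 by rewrite le_max lexx orbT.
rewrite ge_max; apply/andP; split; last by nra.
nra.
Qed.

Lemma mono_comp_meas (f : R -> R) (g : T -> R) : measurable_fun setT g ->
  {homo f : x y / x <= y} -> measurable_fun setT (fun w => f (g w)).
Proof.
move=> mg hf; apply: (measurableT_comp (f := f)) => //.
exact: nondecreasing_measurable.
Qed.

Lemma main_le (rho X0 Xs : T -> R) (x z m : R)
  (rho_L2 : rho \in Lfun P 2%:E)
  (rho_pos : {ae P, forall w, 0 < rho w})
  (X0_Linf : X0 \in Lfun P +oo%E)
  (hz : x / fine 'E_P[rho] - quantile P X0 1 <= z)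
  (hXs : variance_minimal P (Xicx P rho x (fun w => X0 w + z)) Xs)
  (Hm : icx_ge P (fun w => Xs w - m) X0) : m <= z.
Proof.
rewrite leNgt; apply/negP => zm.
have [Epos Efin] := Erho_pos rho_L2 rho_pos.
set e := fine 'E_P[rho] in hz.
have Ee : 'E_P[rho]%E = e%:E by rewrite /e fineK.
have e0 : 0 < e by rewrite -lte_fin -Ee.
set c := x / e in hz.
have ce : c * e = x by rewrite /c divfK// gt_eqF.
have [M [M0 HM]] := Linf_bound X0_Linf.
have mX0 := Lfun_meas X0_Linf.
have mrho := Lfun_meas rho_L2.
case: hXs => -[Xs2 budget icxs] minXs.
have mXs := Lfun_meas Xs2.
have HXm : icx_ge P Xs (fun w => X0 w + m).
  have := icx_affine m (@ler01 R) Hm.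
  have -> : (fun w => 1 * (Xs w - m) + m) = Xs.
    by apply/funext => w; rewrite mul1r subrK.
  by have -> : (fun w => 1 * X0 w + m) = (fun w => X0 w + m) by apply/funext => w; rewrite mul1r.
pose K := M + `|m| + `|c| + 1.
have K0 : 0 < K by rewrite /K; have := normr_ge0 m; have := normr_ge0 c; lra.
pose eps := m - z.
have eps0 : 0 < eps by rewrite /eps subr_gt0.
pose l := Num.min (1/2) (eps / K).
have l0 : 0 < l by rewrite /l lt_min; apply/andP; split; [lra|exact: divr_gt0].
have l1 : l <= 1/2 by rewrite /l ge_min lexx.
have lK : l * K <= eps by rewrite /l -ler_pdivlMr// ge_min lexx orbT.
pose X' := ((1 - l) \o* Xs \+ cst (l * c))%R.
have X'E : X' = (fun w => (1 - l) * Xs w + l * c).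
  by apply/funext => w; rewrite /X' /= mulrC.
have X'2 : X' \in Lfun P 2%:E.
  apply: rpredD => [|h|h]; [by rewrite lee_fin ler1n | apply: Lfun_scale => //; rewrite ler1n | exact: Lfun_cst].
have rho1 := L2_L1 rho_L2.
have rX1 := Lfun2_mul_Lfun1 rho_L2 Xs2.
have budget' : ('E_P[fun w => (rho w * X' w)%R] <= x%:E)%E.
  have -> : (fun w => rho w * X' w) = ((1-l) \o* (rho \* Xs) \+ (l*c) \o* rho)%R.
    by apply/funext => w; rewrite /X' /=; ring.
  rewrite expectationD; last 2 first.
  - by apply: Lfun_scale.
  - by apply: Lfun_scale.
  rewrite !expectationZl// Ee.
  move: budget; have := expectation_fin_num rX1.
  rewrite /=.
  case: ('E_P[_])%E => // r _; rewrite lee_fin -!EFinM -EFinD lee_fin => rx.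
  have l1' : 0 <= 1 - l by lra.
  have := ler_wpM2l l1' rx.
  by rewrite -mulrA ce; lra.
have l1' : 0 <= 1 - l by lra.
have icxX' : icx_ge P X' (fun w => X0 w + z).
  rewrite X'E.
  have h := icx_affine (l * c) l1' HXm.
  apply: (icx_ae _ _ _ h).
  - apply: (@mono_comp_meas (fun y => (1 - l) * (y + m) + l * c) X0) => // u v uv.
    by rewrite lerD2r ler_wpM2l// lerD2r.
  - apply: (@mono_comp_meas (fun y => y + z) X0) => // u v uv.
    by rewrite lerD2r.
  - apply: filterS HM => w hw /=.
    have h1 : X0 w <= M by apply: le_trans hw; exact: ler_norm.
    have h2 : m <= `|m| by exact: ler_norm.
    have h3 : - c <= `|c| by rewrite -normrN; exact: ler_norm.
    have h4 : X0 w + m - c <= K by rewrite /K; lra.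
    have := ler_wpM2l (ltW l0) h4.
    rewrite /eps in lK; nra.
have Vle := minXs X' (And3 X'2 budget' icxX').
have Xs'2 : (1 - l) \o* Xs \in Lfun P 2%:E by apply: Lfun_scale => //; rewrite ler1n.
rewrite /X' varianceD_cst_r// varianceZ// in Vle.
have V0 : variance P Xs = 0%E.
  move: Vle (variance_ge0 P Xs); have := variance_fin_num Xs2.
  case: (variance P Xs) => // v _; rewrite -EFinM !lee_fin => h1 h2.
  have : (1 - l) ^+ 2 < 1 by rewrite expr2; nra.
  by move=> h3; apply/eqP; rewrite eqe; apply/eqP; nra.
have Hk := var0_ae Xs2 V0.
set k := fine 'E_P[Xs] in Hk.
have kc : k <= c.
  have ErXs : ('E_P[fun w => (rho w * Xs w)%R] = (k * e)%:E)%E.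
    rewrite (@expectation_ae_eq _ (k \o* rho)%R).
    - by rewrite expectationZl// Ee EFinM.
    - exact: measurable_funM.
    - exact: measurable_funM.
    - by apply: filterS Hk => w /= ->; rewrite mulrC.
  move: budget; rewrite ErXs lee_fin => h.
  by rewrite /c ler_pdivlMr.
have [hh hc] := hinge_icx k.
have H1 := HXm _ hh hc.
have mXm : measurable_fun setT (fun w => X0 w + m).
  by apply: (@mono_comp_meas (fun y => y + m) X0) => // u v uv; rewrite lerD2r.
have mf1 : measurable_fun setT ((fun y => Num.max (y - k) 0) \o (fun w => X0 w + m)).
  exact: (@mono_comp_meas (fun y => Num.max (y - k) 0) (fun w => X0 w + m)).
have E2 : ('E_P[((fun y => Num.max (y - k) 0) \o Xs)%R] = 0)%E.
  rewrite (@expectation_ae_eq _ (cst 0)) ?expectation_cst//.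
  - exact: (@mono_comp_meas (fun y => Num.max (y - k) 0) Xs).
  - by apply: filterS Hk => w /= ->; rewrite subrr maxxx.
have E0 : ('E_P[((fun y => Num.max (y - k) 0) \o (fun w => X0 w + m))%R] = 0)%E.
  apply/eqP; rewrite eq_le -{1}E2 H1 /=; apply: expectation_ge0 => w /=.
  by rewrite le_max lexx orbT.
have HX0 : {ae P, forall w, X0 w <= k - m}.
  have f0 : forall w, 0 <= ((fun y => Num.max (y - k) 0) \o (fun w => X0 w + m))%R w.
    by move=> w /=; rewrite le_max lexx orbT.
  apply: filterS (ge0_expectation0_ae mf1 f0 E0) => w /= /eqP.
  rewrite eq_le ge_max => /andP[/andP[h _] _]; lra.
have HQ : quantile P X0 1 <= k - m.
  apply: (quantile1_le (M := M)) => //.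
  apply: filterS HM => w hw.
  have := ler_norm (- X0 w); rewrite normrN; lra.
lra.
Qed.
End S.

Unset Implicit Arguments.

Theorem proposition8p2 (d : measure_display) (T : measurableType d)
  (R : realType) (P : probability T R)
  (P_complete : measure_is_complete P) (P_nonatomic : nonatomic P)
  (rho : T -> R) (rho_L2 : rho \in Lfun P 2%:E)
  (rho_pos : {ae P, forall w, 0 < rho w})
  (rho_var : (0 < variance P rho)%E)
  (X0 : T -> R) (X0_Linf : X0 \in Lfun P +oo%E)
  (x z : R) (hz : x / fine 'E_P[rho] - quantile P X0 1 <= z)
  (Xs : T -> R)
  (hXs : variance_minimal P (Xicx P rho x (fun w => X0 w + z)) Xs) :
  beating_perf P X0 Xs = z%:E.
Proof.
apply/le_anti/andP; split.
- apply: ge_ereal_sup => _ [m Hm <-]; rewrite lee_fin.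
  exact: (main_le rho_L2 rho_pos X0_Linf hz hXs Hm).
- apply: ereal_sup_ubound; exists z => //=.
  have [[_ _ icxs] _] := hXs.
  have := icx_affine (- z) (@ler01 R) icxs.
  have -> : (fun w => 1 * Xs w + - z) = (fun w => Xs w - z).
    by apply/funext => w; rewrite mul1r.
  by have -> : (fun w => 1 * (X0 w + z) + - z) = X0 by apply/funext => w; rewrite mul1r addrK.
Qed.
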